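(* Let $\sigma$ be a term ordering on $\mathbb{T}^n$. Let $T=(t_1,\dots,t_r)$ be an interreduced $\sigma$-ordered tuple of elements of $\mathbb{T}^n$, and let $T'$ be a set of elements of $\mathbb{T}^n$. Assume there exist $t'\in T'$ and an index $k\in\{1,\dots,r\}$ such that $t_1,\dots,t_{k-1}\in T'$, $t_k>_\sigma t'$, and $t'$ is not divisible by any $t_i$ in $T$. Then $O_\sigma(T')\prec_\sigma T$, and $T$ is not a proper prefix of $O_\sigma(T')$.
   Context: $\mathbb{T}^n$ is the monoid of power-products in $x_1,\dots,x_n$. A tuple $(t_1,\dots,t_r)$ of distinct power-products is $\sigma$-ordered if $t_1<_\sigma\cdots<_\sigma t_r$. The interreduction of a set $S$ of power-products is the set of elements of $S$ not divisible by any other element of $S$; $S$ (or a tuple) is interreduced if it equals its interreduction. For a set $T'$ of power-products, $O_\sigma(T')$ is the $\sigma$-ordered tuple of the interreduction of $T'$. For $\sigma$-ordered tuples $T=(t_1,\dots,t_r)$ and $T'=(t'_1,\dots,t'_{r'})$, $T'\prec_\sigma T$ means either $T$ is a proper prefix of $T'$ (i.e. $r<r'$ and $t_i=t'_i$ for $i\le r$), or there is $k\le\min(r,r')$ with $t_i=t'_i$ for $i<k$ and $t'_k<_\sigma t_k$. *)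

(* Defs.v *)
From mathcomp Require Import all_boot.
Set Implicit Arguments. Unset Strict Implicit. Unset Printing Implicit Defensive.

(* Power-products in x_1..x_n: exponent vectors. *)
Definition mon (n : nat) := {ffun 'I_n -> nat}.

Definition mone (n : nat) : mon n := [ffun _ => 0%N].
Definition mmul (n : nat) (a b : mon n) : mon n := [ffun i => (a i + b i)%N].
Definition mdiv (n : nat) (a b : mon n) : Prop := forall i, (a i <= b i)%N.

Definition term_ordering (n : nat) (le : mon n -> mon n -> Prop) : Prop :=
  [/\ (forall a, le a a),
      (forall a b, le a b -> le b a -> a = b),
      (forall a b c, le a b -> le b c -> le a c),
      (forall a b, le a b \/ le b a)
    & (forall a b c, le a b -> le (mmul a c) (mmul b c)) /\ (forall a, le (mone n) a)].

Definition tlt (n : nat) (le : mon n -> mon n -> Prop) (a b : mon n) : Prop :=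
  le a b /\ a <> b.

Definition sigma_ordered (n : nat) (le : mon n -> mon n -> Prop) (T : seq (mon n)) :=
  forall i, (i.+1 < size T)%N -> tlt le (nth (mone n) T i) (nth (mone n) T i.+1).

Definition interreduced_seq (n : nat) (T : seq (mon n)) : Prop :=
  forall i j, (i < size T)%N -> (j < size T)%N -> i <> j ->
    ~ mdiv (nth (mone n) T i) (nth (mone n) T j).

Definition interreduction (n : nat) (S : mon n -> Prop) : mon n -> Prop :=
  fun t => S t /\ forall s, S s -> s <> t -> ~ mdiv s t.

(* O_sigma(S) = U : U is the sigma-ordered tuple whose elements are exactly
   those of the interreduction of S (this determines U uniquely). *)
Definition is_O (n : nat) (le : mon n -> mon n -> Prop) (S : mon n -> Prop)
  (U : seq (mon n)) : Prop :=
  sigma_ordered le U /\ forall t, t \in U <-> interreduction S t.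

Definition proper_prefix (n : nat) (T T' : seq (mon n)) : Prop :=
  (size T < size T')%N /\
  forall i, (i < size T)%N -> nth (mone n) T' i = nth (mone n) T i.

Definition prec (n : nat) (le : mon n -> mon n -> Prop) (T' T : seq (mon n)) : Prop :=
  proper_prefix T T' \/
  exists k, [/\ (k < minn (size T) (size T'))%N,
     (forall i, (i < k)%N -> nth (mone n) T' i = nth (mone n) T i)
   & tlt le (nth (mone n) T' k) (nth (mone n) T k)].

(* Main.v *)
Require Import Defs.
From mathcomp Require Import all_boot.
From Stdlib Require Import Classical.
Set Implicit Arguments. Unset Strict Implicit.

Section Aux.
Variable n : nat.
Variable le : mon n -> mon n -> Prop.

Lemma mdiv_le : term_ordering le -> forall a b : mon n, mdiv a b -> le a b.
Proof.
move=> [Hr Ha Ht Htot [Hm H1]] a b hab.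
pose c : mon n := [ffun i => b i - a i].
have := Hm _ _ a (H1 c).
have -> : mmul (mone n) a = a by apply/ffunP => i; rewrite !ffunE.
have -> : mmul c a = b by apply/ffunP => i; rewrite !ffunE subnK.
done.
Qed.

Lemma mdiv_trans (a b c : mon n) : mdiv a b -> mdiv b c -> mdiv a c.
Proof. by move=> h1 h2 i; apply: leq_trans (h1 i) (h2 i). Qed.

Definition deg (a : mon n) := (\sum_(i < n) a i)%N.

Lemma deg_lt (a b : mon n) : mdiv a b -> a <> b -> (deg a < deg b)%N.
Proof.
move=> hab hne.
have [i hi] : exists i, (a i < b i)%N.
  apply: NNPP => hn; apply: hne; apply/ffunP => i.
  apply/eqP; rewrite eqn_leq hab /= leqNgt; apply/negP => h; apply: hn; by exists i.
rewrite /deg (bigD1 i) //= [X in (_ < X)%N](bigD1 i) //=.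
rewrite -addSn leq_add //; apply: leq_sum => j _; exact: hab.
Qed.

Lemma min_div (S : mon n -> Prop) :
  forall x, S x -> exists d, interreduction S d /\ mdiv d x.
Proof.
suff H : forall N x, (deg x < N)%N -> S x -> exists d, interreduction S d /\ mdiv d x.
  by move=> x; apply: (H (deg x).+1).
elim=> [|N IH] x // hx Sx.
case: (classic (exists s, S s /\ s <> x /\ mdiv s x)).
  move=> [s [Ss [ne ds]]].
  have := deg_lt ds ne => hlt.
  have [d [Id dd]] := IH s (leq_trans hlt hx) Ss.
  exists d; split => //; exact: mdiv_trans dd ds.
move=> hn; exists x; split; last by move=> i.
split => // s Ss ne ds; apply: hn; by exists s.
Qed.

Lemma sorted_le : term_ordering le -> forall U : seq (mon n), sigma_ordered le U ->
  forall i m, (i + m < size U)%N -> le (nth (mone n) U i) (nth (mone n) U (i + m)).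
Proof.
move=> [Hr Ha Ht Htot _] U hU i; elim=> [|m IH] h; first by rewrite addn0.
apply: Ht (IH (leq_trans (leqnSn _) (leq_trans _ h))) _; first by rewrite addnS.
rewrite addnS; apply: (proj1 (hU _ _)); by rewrite -addnS.
Qed.

End Aux.

Theorem lemma4p10 (n : nat) (le : mon n -> mon n -> Prop)
  (T : seq (mon n)) (T' : mon n -> Prop) :
  term_ordering le ->
  sigma_ordered le T ->
  interreduced_seq T ->
  (exists (t' : mon n) (k : nat),
      [/\ T' t', (k < size T)%N,
          (forall i, (i < k)%N -> T' (nth (mone n) T i)),
          tlt le t' (nth (mone n) T k)
        & (forall i, (i < size T)%N -> ~ mdiv (nth (mone n) T i) t')]) ->
  forall U : seq (mon n), is_O le T' U ->
    prec le U T /\ ~ proper_prefix T U.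
Proof.
move=> hto hT hI [t' [k [T't hk hpre [hlt hne] hnd]]] U [hU hmem].
have hto' := hto.
case: hto' => [Hr Ha Ht Htot _].
set good := exists k0, [/\ (k0 < minn (size T) (size U))%N,
     (forall i, (i < k0)%N -> nth (mone n) U i = nth (mone n) T i)
   & tlt le (nth (mone n) U k0) (nth (mone n) T k0)].
have step : forall j, (j <= k)%N ->
   (forall i, (i < j)%N -> (i < size U)%N /\ nth (mone n) U i = nth (mone n) T i) ->
   [/\ (j < size U)%N, (nth (mone n) U j <> nth (mone n) T j -> good)
     & (j = k -> nth (mone n) U j <> nth (mone n) T j)].
  move=> j hj hag.
  have hjT : (j < size T)%N by apply: leq_ltn_trans hj hk.
  have [d [Id hdle hdq hdk]] : exists d, [/\ interreduction T' d,
      le d (nth (mone n) T j),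
      (forall q, (q < j)%N -> d <> nth (mone n) T q)
     & (j = k -> le d t')].
    case: (ltnP j k) => hjk.
      have [d [Id dd]] := min_div (hpre _ hjk).
      exists d; split => //; first exact: mdiv_le.
        move=> q hq e; apply: (hI q j) => //.
          exact: ltn_trans hq hjT.
        by move=> e2; rewrite e2 ltnn in hq.
        by rewrite -e.
      by move=> e; rewrite e ltnn in hjk.
    have ejk : j = k by apply/eqP; rewrite eqn_leq hj hjk.
    subst j.
    have [d [Id dd]] := min_div T't.
    have dle := mdiv_le hto dd.
    exists d; split => //.
      exact: (Ht _ _ _ dle hlt).
    move=> q hq e; apply: (hnd q (ltn_trans hq hk)); by rewrite -e.
  have dU : d \in U by apply/hmem.
  set q := index d U.
  have hq : (q < size U)%N by rewrite index_mem.
  have Uq : nth (mone n) U q = d by apply: nth_index.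
  have hjq : (j <= q)%N.
    rewrite leqNgt; apply/negP => hqj.
    apply: (hdq q hqj); rewrite -Uq; exact: (hag q hqj).2.
  have hjU : (j < size U)%N by apply: leq_ltn_trans hjq hq.
  have hUj : le (nth (mone n) U j) d.
    rewrite -Uq -(subnKC hjq); apply: sorted_le => //; by rewrite subnKC.
  split => //.
    move=> neq; exists j; split.
    - by rewrite leq_min hjT hjU.
    - by move=> i hi; exact: (hag i hi).2.
    - split => //; exact: (Ht _ _ _ hUj hdle).
  move=> ejk e; subst j.
  apply: hne; apply: Ha.
    exact: hlt.
  rewrite -e; exact: (Ht _ _ _ hUj (hdk erefl)).
have Q : forall j, (j <= k.+1)%N -> good \/
   (forall i, (i < j)%N -> (i < size U)%N /\ nth (mone n) U i = nth (mone n) T i).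
  elim=> [|j IH] hj; first by right.
  case: (IH (ltnW hj)) => [g|hag]; first by left.
  have [hjU hg hk'] := step j hj hag.
  case: (classic (nth (mone n) U j = nth (mone n) T j)) => e; last by left; apply: hg.
  right => i; rewrite ltnS leq_eqVlt => /orP [/eqP ->|hi]; first by [].
  exact: hag.
have G : good.
  case: (Q k.+1 (leqnn _)) => // hag.
  have [_ hg hk'] := step k (leqnn _) (fun i hi => hag i (ltnW hi)).
  exfalso; apply: (hk' erefl); exact: (hag k (ltnSn _)).2.
split; first by right.
move=> [hs hp].
case: G => [k0 [hk0 _ [_ hne0]]].
apply: hne0; apply: hp; move: hk0; rewrite leq_min => /andP [].
done.
Qed.
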